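(* Let $k$ be a field, let $(X,\leq)$ be a locally finite preordered set and let $C=IC(X)$ be its incidence coalgebra. Let $\tilde X=X/\!\sim$ with the induced partial order (also denoted $\leq$). The following assertions are equivalent: (1) $C$ is right co-Frobenius; (2) $C$ is right quasi-co-Frobenius; (3) $C$ is cosemisimple; (4) for any $x,y\in X$ with $x\leq y$ we also have $y\leq x$ (equivalently, elements in different $\sim$-equivalence classes are not comparable); (5) $IC(\tilde X)$ is right co-Frobenius; (6) the order relation on $\tilde X$ is the equality.
   Context: A preorder is a reflexive and transitive relation; $(X,\leq)$ is locally finite if every interval $[x,y]=\{z\mid x\leq z\leq y\}$ is finite. The incidence coalgebra $IC(X)$ is the $k$-vector space with basis $\{e_{x,y}\mid x,y\in X,\ x\leq y\}$, with comultiplication $\Delta(e_{x,y})=\sum_{x\leq z\leq y}e_{x,z}\otimes e_{z,y}$ and counit $\varepsilon(e_{x,y})=\delta_{x,y}$. The relation $x\sim y$ means $x\leq y$ and $y\leq x$; $\tilde X=X/\!\sim$ is a locally finite partially ordered set with the induced order, and $IC(\tilde X)$ is defined in the same way. For a coalgebra $C$, the dual algebra $C^*$ has convolution product $(f g)(c)=\sum f(c_1)g(c_2)$, and $C$ is a right $C^*$-module via $c\leftharpoonup c^*=\sum c^*(c_1)c_2$. $C$ is called right co-Frobenius if $C$ embeds in $C^*$ as a right $C^*$-module, and right quasi-co-Frobenius if $C$ embeds as a right $C^*$-module in a free right $C^*$-module. $C$ is cosemisimple if it is a direct sum of simple subcoalgebras (equivalently, semisimple as a comodule). *)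

(* Defs.v *)
From HB Require Import structures.
From mathcomp Require Import all_boot all_order all_algebra.
From mathcomp Require Import boolp classical_sets cardinality fsbigop.
Set Implicit Arguments. Unset Strict Implicit. Unset Printing Implicit Defensive.
Import GRing.Theory.
Local Open Scope classical_set_scope.
Local Open Scope ring_scope.

(* Incidence coalgebra IC(Y) of a locally finite preorder (Y, leY) over a
   field k, written in the basis {e_{x,y} | leY x y}.
   - An element of IC(Y) is its coefficient function c : Y -> Y -> k
     (c x y = coefficient of e_{x,y}), vanishing off the relation, with
     finite support.
   - An element of the dual IC(Y)-dual is its value function f : Y -> Y -> k
     (f x y = f(e_{x,y})), normalised to vanish off the relation. *)

Section Incidence.
Variables (k : fieldType) (Y : Type) (leY : Y -> Y -> Prop).

Definition vec := Y -> Y -> k.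

Definition locally_finite :=
  forall x y, finite_set [set z | leY x z /\ leY z y].

Definition isC (c : vec) : Prop :=
  (forall x y, ~ leY x y -> c x y = 0) /\
  finite_set [set p : Y * Y | c p.1 p.2 != 0].

Definition isCd (f : vec) : Prop := forall x y, ~ leY x y -> f x y = 0.

Definition vlin (a : k) (c d : vec) : vec := fun x y => a * c x y + d x y.
Definition vzero : vec := fun _ _ => 0.

Definition conv (f g : vec) : vec := fun x y =>
  \sum_(z \in ([set z | leY x z /\ leY z y] : set {classic Y})) f x z * g z y.

(* right Cstar-action on C: e_{x,y} <- f = sum_{x<=z<=y} f(e_{x,z}) e_{z,y};
   the coefficient of e_{z,y} in c <- f *)
Definition ract (c f : vec) : vec := fun z y =>
  \sum_(x \in ([set x | leY x z /\ leY z y] : set {classic Y})) c x y * f x z.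

Definition right_coFrobenius : Prop :=
  exists phi : vec -> vec,
    [/\ forall c, isC c -> isCd (phi c),
        forall a c d, isC c -> isC d -> phi (vlin a c d) = vlin a (phi c) (phi d),
        forall c d, isC c -> isC d -> phi c = phi d -> c = d &
        forall c f, isC c -> isCd f -> phi (ract c f) = conv (phi c) f].

(* right quasi-co-Frobenius: C embeds as a right Cstar-module in a free right
   Cstar-module (Cstar)^{(I)} (finitely supported families, componentwise action) *)
Definition right_qcF : Prop :=
  exists (I : Type) (phi : vec -> I -> vec),
    [/\ forall c, isC c -> (forall i, isCd (phi c i)) /\
                           finite_set [set i | phi c i <> vzero],
        forall a c d, isC c -> isC d ->
          phi (vlin a c d) = (fun i => vlin a (phi c i) (phi d i)),
        forall c d, isC c -> isC d -> phi c = phi d -> c = d &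
        forall c f, isC c -> isCd f ->
          phi (ract c f) = (fun i => conv (phi c i) f)].

(* comultiplication: coefficient of e_{a,b} (x) e_{u,v} in Delta(c) *)
Definition Delta (c : vec) (a b u v : Y) : k :=
  if `[< b = u /\ leY a b /\ leY b v >] then c a v else 0.

Definition subcoalgebra (D : set vec) : Prop :=
  [/\ D `<=` isC, D vzero,
      forall a c d, D c -> D d -> D (vlin a c d) &
      forall d, D d -> exists s : seq (vec * vec),
        (forall p, p \in s -> D p.1 /\ D p.2) /\
        forall a b u v, Delta d a b u v = \sum_(p <- s) p.1 a b * p.2 u v].

Definition simple_subcoalgebra (D : set vec) : Prop :=
  [/\ subcoalgebra D, exists d, D d /\ d <> vzero &
      forall E, subcoalgebra E -> E `<=` D -> E = [set vzero] \/ E = D].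

Definition cosemisimple : Prop :=
  exists (I : Type) (D : I -> set vec),
    [/\ forall i, simple_subcoalgebra (D i),
        forall c, isC c -> exists d : I -> vec,
          [/\ forall i, D i (d i), finite_set [set i | d i <> vzero] &
              forall x y, c x y =
                \sum_(i \in ([set: I] : set {classic I})) d i x y] &
        forall d : I -> vec, (forall i, D i (d i)) ->
          finite_set [set i | d i <> vzero] ->
          (forall x y, \sum_(i \in ([set: I] : set {classic I})) d i x y = 0) ->
          forall i, d i = vzero].

End Incidence.

(* The quotient X/~ of a preordered set by x ~ y <-> x <= y /\ y <= x,
   with the induced order. Classes are represented as subsets of X. *)
Section Quotient.
Variables (X : Type) (le : X -> X -> Prop).

Definition equiv_cls (x : X) : set X := [set y | le x y /\ le y x].

Definition quot : Type := {A : set X | exists x, A = equiv_cls x}.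

Definition quot_le (A B : quot) : Prop :=
  exists x y, proj1_sig A = equiv_cls x /\ proj1_sig B = equiv_cls y /\ le x y.

End Quotient.

(* Main.v *)
Require Import Defs.
From HB Require Import structures.
From mathcomp Require Import all_boot all_order all_algebra.
From mathcomp Require Import boolp classical_sets cardinality fsbigop.
From mathcomp Require Import finmap.
Set Implicit Arguments. Unset Strict Implicit. Unset Printing Implicit Defensive.
Import GRing.Theory.
Local Open Scope classical_set_scope.
Local Open Scope ring_scope.
Lemma fsum_pt (k : fieldType) (I : choiceType) (A : set I) (F : I -> k) (j : I) :
  (forall i, i <> j -> F i = 0) -> \sum_(i \in A) F i = if `[< A j >] then F j else 0.
Proof.
move=> F0; case: asboolP => Aj.
  rewrite -(fsbig_widen [set j]) ?fsbig_set1 //; first by move=> i ->.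
  by move=> i [_ /= ij]; exact: F0.
apply: fsbig1 => i Ai; apply: F0 => ij; subst; contradiction.
Qed.

Definition eu (k : fieldType) (Y : eqType) (z w : Y) : vec k Y :=
  fun a b => if (a == z) && (b == w) then 1 else 0.

Lemma sym_coFrob (k : fieldType) (Y : Type) (le : Y -> Y -> Prop)
  (tr : forall x y z, le x y -> le y z -> le x z)
  (sym : forall x y, le x y -> le y x) : right_coFrobenius k le.
Proof.
exists (fun c x y => c y x); split.
- by move=> c [Hc _] x y nxy; apply: Hc => /sym.
- by [].
- move=> c d _ _ E; apply/funext=> x; apply/funext=> y.
  exact: (congr1 (fun f : vec k Y => f y x) E).
- move=> c f _ _; apply/funext=> u; apply/funext=> w; rewrite /ract /conv.
  apply: eq_fsbigl; apply/seteqP; split=> z /= [h1 h2]; split.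
  + exact: tr (sym _ _ h2) (sym _ _ h1).
  + exact: h1.
  + exact: h2.
  + exact: tr (sym _ _ h2) (sym _ _ h1).
Qed.

Lemma coFrob_qcF (k : fieldType) (Y : Type) (le : Y -> Y -> Prop) :
  right_coFrobenius k le -> right_qcF k le.
Proof.
case=> phi [H1 H2 H3 H4]; exists unit, (fun c _ => phi c); split.
- move=> c Cc; split=> [_|]; first exact: H1.
  by apply: (sub_finite_set (B := [set tt])) => [[] _ //|]; exact: finite_set1.
- by move=> a c d Cc Cd; rewrite H2.
- move=> c d Cc Cd E; apply: H3 => //; exact: (congr1 (fun f => f tt) E).
- by move=> c f Cc Cf; rewrite H4.
Qed.

Lemma isC_vzero (k : fieldType) (Y : Type) (le : Y -> Y -> Prop) : isC le ((@vzero k Y)).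
Proof.
split=> // ; apply: (sub_finite_set (B := set0)); last exact: finite_set0.
by move=> p /=; rewrite eqxx.
Qed.

Lemma isC_eu (k : fieldType) (Y : eqType) (le : Y -> Y -> Prop) z w :
  le z w -> isC le (eu k z w).
Proof.
move=> lzw; split.
  move=> a b nab; rewrite /eu; case: (a =P z) => az; case: (b =P w) => bw //=.
  by subst; contradiction.
apply: (sub_finite_set (B := [set (z, w)])); last exact: finite_set1.
move=> [a b] /=; rewrite /eu; case: (a =P z) => az; case: (b =P w) => bw //=.
  by subst. all: by rewrite eqxx.
Qed.

Lemma qcF_sym (k : fieldType) (Y : choiceType) (le : Y -> Y -> Prop)
  (refl : forall x, le x x) : right_qcF k le -> forall x y, le x y -> le y x.
Proof.
case=> I [phi [H1 H2 H3 H4]] x y lxy.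
case: (pselect (le y x)) => // nyx; exfalso.
have Cx : isC le (eu k x x) by exact: isC_eu.
have Dx : isCd le (eu k x x) by case: Cx.
have Dxy : isCd le (eu k x y) by case: (isC_eu k lxy).
have Z : phi ((@vzero k Y)) = fun=> (@vzero k Y).
  have -> : (@vzero k Y) = vlin (-1) ((@vzero k Y)) ((@vzero k Y)).
    by apply/funext=> u; apply/funext=> w; rewrite /vlin /vzero mulr0 addr0.
  rewrite H2; try exact: isC_vzero.
  apply/funext=> i; apply/funext=> u; apply/funext=> w.
  by rewrite /vlin /vzero mulN1r addNr mulr0 addr0.
have R1 : ract le (eu k x x) (eu k x x) = eu k x x.
  apply/funext=> z; apply/funext=> w; rewrite /ract (@fsum_pt k {classic Y} _ _ x).
    rewrite /eu (eqxx (x : Y)) /=.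
    case: asboolP => [[l1 l2]|nl];
    case: (@eqP Y z x) => zx; case: (@eqP Y w x) => wx //=;
      rewrite ?mulr1 ?mulr0 ?mul0r //.
    by subst; case: nl; split.
  by move=> a ax; rewrite /eu (introF (@eqP Y a x) ax) mul0r.
have R2 : ract le (eu k x x) (eu k x y) = (@vzero k Y).
  apply/funext=> z; apply/funext=> w; rewrite /ract (@fsum_pt k {classic Y} _ _ x).
    case: asboolP => [[l1 l2]|nl] //; rewrite /eu (eqxx (x : Y)) /=.
    case: (@eqP Y z y) => zy; case: (@eqP Y w x) => wx //=; rewrite ?mulr0 ?mul0r //.
    by subst; case: nyx.
  by move=> a ax; rewrite /eu (introF (@eqP Y a x) ax) mul0r.
have P1 := H4 _ _ Cx Dx; rewrite R1 in P1.
have P2 := H4 _ _ Cx Dxy; rewrite R2 Z in P2.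
have E : phi (eu k x x) = phi ((@vzero k Y)).
  rewrite Z; apply/funext=> i; set g := phi (eu k x x) i.
  have Eg : g = conv le g (eu k x x) by rewrite /g {1}P1.
  have Fg : forall u, g u x = 0.
    move=> u; have := congr1 (fun f => f i u y) P2; rewrite /= /conv.
    rewrite (@fsum_pt k {classic Y} _ _ x).
      case: asboolP => [[l1 l2]|nl].
        by rewrite /eu !(eqxx (_ : Y)) mulr1 => E1; rewrite /g -E1.
      move=> _; case: (H1 _ Cx) => D _; rewrite /g; apply: D => lux; apply: nl; split=> //.
    move=> t tx; rewrite /eu (introF (@eqP Y t x) tx) /=; exact: mulr0.
  apply/funext=> u; apply/funext=> w; rewrite Eg /conv (@fsum_pt k {classic Y} _ _ x).
    by case: asboolP => // _; rewrite Fg mul0r.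
  by move=> t tx; rewrite /eu (introF (@eqP Y t x) tx) mulr0.
have := H3 _ _ Cx (isC_vzero _ _) E.
move/(congr1 (fun f : vec k Y => f x x)); rewrite /eu /vzero (eqxx (x : Y)) /=.
by move/eqP; rewrite oner_eq0.
Qed.

Lemma sum_pt_seq (k : fieldType) (T : eqType) (s : seq T) (F : T -> k) j :
  uniq s -> (forall i, i != j -> F i = 0) ->
  \sum_(i <- s) F i = if j \in s then F j else 0.
Proof.
move=> us F0; case: ifP => js.
  by rewrite (bigD1_seq j) //= big1 ?addr0.
rewrite big1_seq // => i /= iS; apply: F0; apply/eqP => ij; subst.
by rewrite iS in js.
Qed.

Lemma memfs (T : choiceType) (A : set T) x : finite_set A ->
  (x \in fset_set A) = `[< A x >].
Proof.
by move=> fA; rewrite in_fset_set //; apply/idP/asboolP => [/set_mem|/mem_set].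
Qed.

Lemma isC_vlin (k : fieldType) (Y : Type) (le : Y -> Y -> Prop) (a : k) (c d : vec k Y) :
  isC le c -> isC le d -> isC le (vlin a c d).
Proof.
move=> [c0 cf] [d0 df]; split.
  by move=> x y nxy; rewrite /vlin c0 // d0 // mulr0 addr0.
have : finite_set ([set p : Y * Y | c p.1 p.2 != 0] `|` [set p | d p.1 p.2 != 0]).
  by rewrite finite_setU.
apply: sub_finite_set => p /=; rewrite /vlin.
case: (c p.1 p.2 =P 0) => [->|/eqP] ; last by left.
by rewrite mulr0 add0r => ?; right.
Qed.

Lemma LC (k : fieldType) (Y : Type) (le : Y -> Y -> Prop) (E : set (vec k Y))
  (T : eqType) (s : seq T) (al : T -> k) (g : T -> vec k Y) :
  subcoalgebra le E -> (forall p, p \in s -> E (g p)) ->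
  E (fun u w => \sum_(p <- s) al p * g p u w).
Proof.
case=> _ E0 El _; elim: s => [|p s IH] H.
  have -> : (fun u w : Y => \sum_(p <- [::]) al p * g p u w) = @vzero k Y.
    by apply/funext=> u; apply/funext=> w; rewrite big_nil.
  exact: E0.
have -> : (fun u w : Y => \sum_(q <- p :: s) al q * g q u w) =
   vlin (al p) (g p) (fun u w : Y => \sum_(q <- s) al q * g q u w).
  by apply/funext=> u; apply/funext=> w; rewrite big_cons.
apply: El; first by apply: H; rewrite inE eqxx.
by apply: IH => q qs; apply: H; rewrite inE qs orbT.
Qed.

Lemma Lrow (k : fieldType) (Y : Type) (le : Y -> Y -> Prop) (E : set (vec k Y)) c a t :
  subcoalgebra le E -> E c -> E (fun u w => Delta le c a t u w).
Proof.
move=> HE Ec; have [_ _ _ D] := HE; have [s [Hs Ds]] := D _ Ec.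
have -> : (fun u w => Delta le c a t u w) =
    (fun u w => \sum_(p <- s) p.1 a t * p.2 u w).
  by apply/funext=> u; apply/funext=> w; rewrite Ds.
by apply: (LC (le := le)) => // p /Hs [].
Qed.

Lemma Lcol (k : fieldType) (Y : Type) (le : Y -> Y -> Prop) (E : set (vec k Y)) c u w :
  subcoalgebra le E -> E c -> E (fun a b => Delta le c a b u w).
Proof.
move=> HE Ec; have [_ _ _ D] := HE; have [s [Hs Ds]] := D _ Ec.
have -> : (fun a b => Delta le c a b u w) =
    (fun a b => \sum_(p <- s) p.2 u w * p.1 a b).
  apply/funext=> a; apply/funext=> b; rewrite Ds.
  by apply: eq_bigr => p _; rewrite mulrC.
by apply: (LC (le := le)) => // p /Hs [].
Qed.

Lemma unit_in (k : fieldType) (Y : choiceType) (le : Y -> Y -> Prop)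
  (refl : forall x, le x x)
  (tr : forall x y z, le x y -> le y z -> le x z)
  (E : set (vec k Y)) (d : vec k Y) a v :
  subcoalgebra le E -> E d -> d a v != 0 ->
  forall z w, le v z -> le z v -> le v w -> le w v -> E (eu k z w).
Proof.
move=> HE Ed dav z w lvz lzv lvw lwv.
have [sub E0 El _] := HE.
have lav : le a v.
  case: (pselect (le a v)) => // nav; have [d0 _] := sub _ Ed.
  by rewrite d0 ?eqxx in dav.
have Eg := Lrow a v HE Ed.
set g := (fun u w => Delta le d a v u w) in Eg.
have Eh := Lcol v v HE Eg.
have Evv : E (eu k v v).
  have -> : eu k v v = vlin (d a v)^-1 (fun a' b' => Delta le g a' b' v v) (@vzero k Y).
    apply/funext=> a'; apply/funext=> b'; rewrite /vlin /vzero /g /Delta /eu addr0.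
    case: asboolP => [[ebv [l1 l2]]|n1].
      subst b'; case: asboolP => [[eva [_ _]]|n2].
        by subst a'; rewrite !eqxx (mulVf dav).
      case: (a' =P v) => [eav|_]; last by rewrite mulr0.
      by subst; case: n2.
    case: (a' =P v) => [eav|_] //=; last by rewrite mulr0.
    case: (b' =P v) => [ebv|_] //=; last by rewrite mulr0.
    by subst; case: n1.
  by apply: El => //.
have Ezv : E (eu k z v).
  have -> : eu k z v = (fun u w => Delta le (eu k v v) v z u w).
    apply/funext=> u; apply/funext=> w'; rewrite /Delta /eu eqxx /=.
    case: asboolP => [[ezu [l1 l2]]|n1].
      by subst u; rewrite eqxx.
    case: (u =P z) => [euz|] //=; case: (w' =P v) => [ewv|] //=.
    by subst; case: n1.
  exact: Lrow.
have -> : eu k z w = (fun a' b' => Delta le (eu k z v) a' b' w v).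
  apply/funext=> a'; apply/funext=> b'; rewrite /Delta /eu eqxx andbT.
  case: asboolP => [[ebw [l1 l2]]|n1].
    by subst b'; rewrite eqxx andbT.
  case: (a' =P z) => [eaz|] //=; case: (b' =P w) => [ebw|] //=.
  by subst; case: n1; split=> //; split=> //; exact: tr lzv lvw.
exact: Lcol.
Qed.

Lemma sub_units (k : fieldType) (Y : choiceType) (le : Y -> Y -> Prop)
  (lf : locally_finite le) (E : set (vec k Y)) :
  E `<=` isC le -> E (@vzero k Y) ->
  (forall a c d, E c -> E d -> E (vlin a c d)) ->
  (forall c p1 p2 t, E c -> c p1 p2 != 0 -> le p1 t -> le t p2 ->
     E (eu k p1 t) /\ E (eu k t p2)) ->
  subcoalgebra le E.
Proof.
move=> sub E0 El U; split => // c Ec.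
have [c0 cf] := sub _ Ec.
set S := [set p : Y * Y | c p.1 p.2 != 0] in cf.
pose s := fset_set S.
pose T := fun p : Y * Y => fset_set [set t | le p.1 t /\ le t p.2].
exists (flatten [seq [seq (vlin (c p.1 p.2) (eu k p.1 t) (@vzero k Y), eu k t p.2)
   | t <- T p] | p <- s]).
split.
- move=> q /flatten_mapP [p ps] /mapP [t tT ->] /=.
  rewrite memfs // in ps; move/asboolP: ps => cp.
  rewrite memfs in tT; last exact: lf.
  move/asboolP: tT => [l1 l2].
  have [U1 U2] := U c p.1 p.2 t Ec cp l1 l2.
  by split => //; apply: El.
- move=> a b u w.
  rewrite big_flatten /= big_map.
  rewrite (eq_bigr (fun p => if b \in T p then
     (vlin (c p.1 p.2) (eu k p.1 b) (@vzero k Y)) a b * eu k b p.2 u w else 0)); last first.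
    move=> p _; rewrite big_map; apply: sum_pt_seq; first exact: fset_uniq.
    move=> t tb; rewrite /= /vlin /vzero /eu (eq_sym b t) (negbTE tb) andbF.
    by rewrite mulr0 add0r mul0r.
  rewrite (sum_pt_seq (j := (a, w))); first last.
  + move=> [p1 p2] pne; case: ifP => // _; rewrite /vlin /vzero /eu /=.
    case: (a =P p1) => [ap|_]; last by rewrite /= mulr0 add0r mul0r.
    case: (w =P p2) => [wp|_]; last by rewrite andbF mulr0.
    by subst; rewrite eqxx in pne.
  + exact: fset_uniq.
  rewrite /Delta memfs // memfs ?(lf a w) //= /vlin /vzero /eu !eqxx /= addr0 mulr1.
  case: (asboolP (S (a, w))) => [ca|nca]; last first.
    by have/negP := nca; rewrite negbK => /eqP ->; case: ifP.
  case: asboolP => [[ebu [l1 l2]]|nD].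
    by subst u; rewrite (asboolT (conj l1 l2)) eqxx mulr1.
  case: asboolP => [[l1 l2]|_]; last by [].
  case: (u =P b) => [eub|] /=; last by rewrite mulr0.
  by subst; case: nD.
Qed.

Definition Mset (k : fieldType) (Y : Type) (le : Y -> Y -> Prop) (A : set Y) :
  set (vec k Y) := [set c | isC le c /\ forall a b, c a b != 0 -> A a /\ A b].

Lemma eu_supp (k : fieldType) (Y : eqType) (z w a b : Y) :
  eu k z w a b != 0 -> a = z /\ b = w.
Proof.
rewrite /eu; case: (a =P z) => [->|] //=; last by rewrite eqxx.
by case: (b =P w) => [->|] //=; rewrite eqxx.
Qed.

Lemma M_eu (k : fieldType) (Y : eqType) (le : Y -> Y -> Prop) (A : set Y) z w :
  A z -> A w -> le z w -> Mset (k:=k) le A (eu k z w).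
Proof.
move=> Az Aw lzw; split; first exact: isC_eu.
by move=> a b /eu_supp [-> ->].
Qed.

Lemma M_sub (k : fieldType) (Y : choiceType) (le : Y -> Y -> Prop)
  (lf : locally_finite le) (E : set (vec k Y)) (A : set Y) :
  E `<=` isC le -> E (@vzero k Y) ->
  (forall a c d, E c -> E d -> E (vlin a c d)) ->
  (forall a t b, A a -> A b -> le a t -> le t b -> A t) ->
  (forall z w, A z -> A w -> le z w -> E (eu k z w)) ->
  subcoalgebra le (E `&` Mset (k:=k) le A).
Proof.
move=> sub E0 El cvx U; apply: sub_units => //.
- by move=> c [/sub].
- split=> //; split; first exact: isC_vzero.
  by move=> a b; rewrite /vzero eqxx.
- move=> a c d [Ec [Cc Mc]] [Ed [Cd Md]]; split; first exact: El.
  split; first exact: isC_vlin.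
  move=> x y; rewrite /vlin; case: (c x y =P 0) => [->|/eqP]; last by move/Mc.
  by rewrite mulr0 add0r => /Md.
- move=> c p1 p2 t [Ec [Cc Mc]] cp l1 l2.
  have [A1 A2] := Mc _ _ cp.
  have At : A t by exact: cvx A1 A2 l1 l2.
  by split; split; [exact: U | exact: M_eu | exact: U | exact: M_eu].
Qed.

Lemma span_eu (k : fieldType) (Y : choiceType) (le : Y -> Y -> Prop) (c : vec k Y)
  (fc : finite_set [set p : Y * Y | c p.1 p.2 != 0]) :
  (fun u w => \sum_(p <- fset_set [set p : Y * Y | c p.1 p.2 != 0])
      c p.1 p.2 * eu k p.1 p.2 u w) = c.
Proof.
apply/funext=> u; apply/funext=> w.
rewrite (sum_pt_seq (j := (u, w))); first last.
- move=> [p1 p2] pne; rewrite /eu /=.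
  case: (u =P p1) => [up|_]; last by rewrite /= mulr0.
  case: (w =P p2) => [wp|_]; last by rewrite andbF mulr0.
  by subst; rewrite eqxx in pne.
- exact: fset_uniq.
rewrite memfs //= /eu !eqxx mulr1; case: asboolP => // nc.
by have/negP := nc; rewrite negbK => /eqP ->.
Qed.

Lemma simple_cls (k : fieldType) (Y : choiceType) (le : Y -> Y -> Prop)
  (refl : forall x, le x x)
  (tr : forall x y z, le x y -> le y z -> le x z)
  (lf : locally_finite le) (E : set (vec k Y)) (d : vec k Y) a v :
  simple_subcoalgebra le E -> E d -> d a v != 0 -> le v a.
Proof.
move=> [HE _ Hmin] Ed dav.
have [sub E0 El _] := HE.
set A := equiv_cls le v.
have U : forall z w, A z -> A w -> le z w -> E (eu k z w).
  move=> z w [l1 l2] [l3 l4] _; exact: (unit_in refl tr HE Ed dav).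
have cvx : forall a t b, A a -> A b -> le a t -> le t b -> A t.
  move=> x t b [l1 l2] [l3 l4] l5 l6; split; [exact: tr l1 l5 | exact: tr l6 l4].
have HF := M_sub lf sub E0 El cvx U.
have FE : E `&` Mset (k:=k) le A `<=` E by move=> c [].
have Fvv : (E `&` Mset (k:=k) le A) (eu k v v).
  have Av : A v by exact: (conj (refl v) (refl v)).
  by split; [apply: U | apply: M_eu]; try exact: Av; apply: refl.
case: (Hmin _ HF FE) => [F0|FE'].
- have := Fvv; rewrite F0 /= => /(congr1 (fun f : vec k Y => f v v)).
  by rewrite /eu /vzero eqxx /= => /eqP; rewrite oner_eq0.
- have : (E `&` Mset (k:=k) le A) d by rewrite FE'.
  by move=> [_ [_ /(_ _ _ dav) [[]]]].
Qed.

Lemma cs_sym (k : fieldType) (Y : choiceType) (le : Y -> Y -> Prop)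
  (refl : forall x, le x x)
  (tr : forall x y z, le x y -> le y z -> le x z)
  (lf : locally_finite le) : cosemisimple k le -> forall x y, le x y -> le y x.
Proof.
case=> I [D [Hs Hd _]] x y lxy.
case: (pselect (le y x)) => // nyx; exfalso.
have [d [Dd _ Hsum]] := Hd _ (isC_eu k lxy).
have := Hsum x y; rewrite /eu !eqxx /= fsbig1.
  by move/eqP; rewrite oner_eq0.
move=> i _; case: (d i x y =P 0) => // /eqP nz; case: nyx.
exact: (simple_cls refl tr lf (Hs i) (Dd i) nz).
Qed.

Definition qcls (Y : Type) (le : Y -> Y -> Prop) (v : Y) : quot le :=
  exist _ (equiv_cls le v) (ex_intro _ v erefl).

Lemma qcls_eq (Y : Type) (le : Y -> Y -> Prop)
  (tr : forall x y z, le x y -> le y z -> le x z) (A : quot le) a :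
  proj1_sig A a -> A = qcls le a.
Proof.
case: A => B [x eB] /= Ba; subst B; move: Ba => [l1 l2]; rewrite /qcls.
apply: eq_exist; apply/seteqP; split => z [l3 l4]; split.
- exact: tr l2 l3.
- exact: tr l4 l1.
- exact: tr l1 l3.
- exact: tr l4 l2.
Qed.

Lemma nonzero_entry (k : fieldType) (Y : Type) (c : vec k Y) :
  c <> @vzero k Y -> exists a b, c a b != 0.
Proof.
move=> cn0; apply: (contra_notP (P := c = @vzero k Y)) cn0 => H.
apply/funext=> a; apply/funext=> b.
by case: (c a b =P 0) => // /eqP nz; case: H; exists a, b.
Qed.

Lemma simple_M (k : fieldType) (Y : choiceType) (le : Y -> Y -> Prop)
  (refl : forall x, le x x)
  (tr : forall x y z, le x y -> le y z -> le x z)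
  (lf : locally_finite le) x :
  simple_subcoalgebra le (Mset (k:=k) le (equiv_cls le x)).
Proof.
set A := equiv_cls le x.
have cvx : forall a t b, A a -> A b -> le a t -> le t b -> A t.
  move=> y t b [l1 l2] [l3 l4] l5 l6; split; [exact: tr l1 l5 | exact: tr l6 l4].
have HM : subcoalgebra le (Mset (k:=k) le A).
  have -> : Mset (k:=k) le A = isC le `&` Mset (k:=k) le A.
    by apply/seteqP; split => c; [move=> h; split=> //; case: h | case].
  apply: M_sub => //.
  - exact: isC_vzero.
  - by move=> *; apply: isC_vlin.
  - by move=> z w _ _ lzw; apply: isC_eu.
have Ax : A x by exact: (conj (refl x) (refl x)).
split => //.
  exists (eu k x x); split; first exact: M_eu.
  move/(congr1 (fun f : vec k Y => f x x)); rewrite /eu /vzero eqxx /=.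
  by move/eqP; rewrite oner_eq0.
move=> E HE sEM; have [_ E0 _ _] := HE.
case: (pselect (exists c, E c /\ c <> @vzero k Y)) => [[c [Ec cn0]]|none].
- right; have [a [b cab]] := nonzero_entry cn0.
  have [Aa Ab] := (sEM c Ec).2 _ _ cab.
  have U : forall z w, A z -> A w -> E (eu k z w).
    move: Ab => [l1 l2] z w [l3 l4] [l5 l6].
    by apply: (unit_in refl tr HE Ec cab); [exact: tr l2 l3 | exact: tr l4 l1 |
      exact: tr l2 l5 | exact: tr l6 l1].
  apply/seteqP; split => // c' Mc'.
  have fc' := Mc'.1.2.
  rewrite -(@span_eu k Y le c' fc'); apply: (LC (le := le)) => // p.
  rewrite memfs // => /asboolP pc.
  have [Ap1 Ap2] := Mc'.2 _ _ pc; exact: U.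
- left; apply/seteqP; split => c; last by move=> ->.
  move=> Ec; case: (pselect (c = @vzero k Y)) => // h; case: none; exists c.
  by split.
Qed.

Lemma sym_cs (k : fieldType) (Y : choiceType) (le : Y -> Y -> Prop)
  (refl : forall x, le x x)
  (tr : forall x y z, le x y -> le y z -> le x z)
  (lf : locally_finite le) (sym : forall x y, le x y -> le y x) :
  cosemisimple k le.
Proof.
exists (quot le), (fun A => Mset (k:=k) le (proj1_sig A)); split.
- move=> A; case: (proj2_sig A) => x ->; exact: simple_M.
- move=> c [c0 cf].
  pose d := fun (A : quot le) (a b : Y) => if `[< proj1_sig A a >] then c a b else 0.
  exists d; split.
  + move=> A; case: (proj2_sig A) => x eA; split; first split.
    * by move=> a b nab; rewrite /d; case: ifP => // _; apply: c0.
    * apply: sub_finite_set cf => p /=; rewrite /d; case: ifP => //.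
      by rewrite eqxx.
    * move=> a b; rewrite /d; case: asboolP => [Aa cab|_]; last by rewrite eqxx.
      move: (Aa); rewrite eA => -[l1 l2].
      have lab : le a b.
        by case: (pselect (le a b)) => // nab; rewrite c0 ?eqxx in cab.
      split; split => //; [exact: tr l1 lab | exact: tr (sym _ _ lab) l2].
  + apply: (sub_finite_set (B := (fun p : Y * Y => qcls le p.1) @`
        [set p : Y * Y | c p.1 p.2 != 0])); last exact: finite_image.
    move=> A /= /nonzero_entry [a [b]]; rewrite /d; case: asboolP => [Aa|]; last by rewrite eqxx.
    move=> cab; exists (a, b) => //=; exact/esym/qcls_eq.
  + move=> x y; rewrite (@fsum_pt k {classic (quot le)} _ _ (qcls le x)).
      by rewrite asboolT //= /d asboolT //=; exact: (conj (refl x) (refl x)).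
    move=> A nA; rewrite /d; case: asboolP => // Ax.
    by case: nA; exact: qcls_eq.
- move=> d' Dd' _ Hs A; apply/funext=> x; apply/funext=> y.
  case: (d' A x y =P 0) => // /eqP nz; exfalso.
  have [Ax _] := (Dd' A).2 _ _ nz.
  have := Hs x y; rewrite (@fsum_pt k {classic (quot le)} _ _ A).
    by rewrite asboolT // => /eqP; rewrite (negbTE nz).
  move=> B nB; case: (d' B x y =P 0) => // /eqP nzB.
  have [Bx _] := (Dd' B).2 _ _ nzB.
  by case: nB; rewrite (qcls_eq tr Bx) (qcls_eq tr Ax).
Qed.

Lemma cls_rep (X : Type) (le : X -> X -> Prop) (refl : forall x, le x x)
  (A : quot le) x x' :
  proj1_sig A = equiv_cls le x -> proj1_sig A = equiv_cls le x' -> le x x' /\ le x' x.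
Proof.
move=> e1 e2; have : equiv_cls le x x by split; apply: refl.
by rewrite -e1 e2 => -[].
Qed.

Theorem mainTheorem1 (k : fieldType) (X : Type) (le : X -> X -> Prop)
    (le_refl : forall x, le x x)
    (le_trans : forall x y z, le x y -> le y z -> le x z)
    (lf : @locally_finite X le) :
  [<-> @right_coFrobenius k X le;
       @right_qcF k X le;
       @cosemisimple k X le;
       (forall x y, le x y -> le y x);
       @right_coFrobenius k (quot le) (@quot_le X le);
       (forall A B : quot le, @quot_le X le A B -> A = B)].
Proof.
pose Y : choiceType := {classic X}.
pose Q : choiceType := {classic (quot le)}.
have qrefl : forall A : quot le, quot_le A A.
  by move=> A; case: (proj2_sig A) => x e; exists x, x.
have qtr : forall A B C : quot le, quot_le A B -> quot_le B C -> quot_le A C.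
  move=> A B C [x [y [eA [eB lxy]]]] [y' [z [eB' [eC lyz]]]].
  have [l1 _] := cls_rep le_refl eB eB'.
  by exists x, z; split=> //; split=> //; apply: le_trans lxy (le_trans _ _ _ l1 lyz).
have sym6 : (forall A B : quot le, quot_le A B -> A = B) ->
    forall x y, le x y -> le y x.
  move=> H6 x y lxy.
  have := H6 (qcls le x) (qcls le y) (ex_intro _ x (ex_intro _ y (conj erefl (conj erefl lxy)))).
  move/(congr1 (@proj1_sig _ _)) => /= E.
  have : equiv_cls le y y by split; apply: le_refl.
  by rewrite -E => -[].
tfae.
- exact: coFrob_qcF.
- move=> H2; have sym := @qcF_sym k Y le le_refl H2.
  exact: (@sym_cs k Y le le_refl le_trans lf sym).
- exact: (@cs_sym k Y le le_refl le_trans lf).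
- move=> sym; apply: sym_coFrob => //.
  move=> A B [x [y [eA [eB lxy]]]]; exists y, x; split=> //; split=> //.
  exact: sym.
- move=> H5; have := @qcF_sym k Q (@quot_le X le) qrefl (coFrob_qcF H5).
  move=> qsym A B AB; have BA := qsym _ _ AB.
  move: AB BA => [x [y [eA [eB lxy]]]] [y' [x' [eB' [eA' lyx]]]].
  have [_ l1] := cls_rep le_refl eA eA'.
  have [l2 _] := cls_rep le_refl eB eB'.
  have lyx' : le y x by apply: le_trans l2 (le_trans _ _ _ lyx l1).
  have Ax : proj1_sig A x by rewrite eA; split; apply: le_refl.
  have By : proj1_sig B y by rewrite eB; split; apply: le_refl.
  rewrite (qcls_eq le_trans Ax) (qcls_eq le_trans By).
  symmetry; apply: qcls_eq => //=; split => //.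
- move=> H6; apply: sym_coFrob => //; exact: sym6.
Qed.
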